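(* Let $F$ be a finite subset of $\mathbb{Z}^k$ that tiles $\mathbb{Z}^k$, and let $D=(F-F)\setminus\{0\}$. Then $\mathrm{Md}_{\mathbb{Z}^k}(D)=1/|F|$.
   Context: $F$ tiles $\mathbb{Z}^k$ if there is $C\subset\mathbb{Z}^k$ with $\mathbb{Z}^k=\bigsqcup_{x\in C}(F+x)$ (disjoint union). For $E\subset\mathbb{Z}^k$: $\phi_E(S)=\max\{|A|:A\subset S,\ (A-A)\cap E=\emptyset\}$ for finite $S$, and $\mathrm{Md}_{\mathbb{Z}^k}(E)=\lim_N\phi_E(F_N)/|F_N|$ for any Følner sequence $(F_N)$ in $\mathbb{Z}^k$ (limit exists, independent of the sequence). *)

(* Defs.v *)
From HB Require Import structures.
From mathcomp Require Import all_boot all_order all_algebra.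
From mathcomp Require Import finmap.
From mathcomp Require Import all_classical all_reals all_analysis.
Set Implicit Arguments. Unset Strict Implicit. Unset Printing Implicit Defensive.
Import Order.TTheory GRing.Theory Num.Theory.
Import numFieldNormedType.Exports.

Local Open Scope ring_scope.
Local Open Scope classical_set_scope.
Local Open Scope fset_scope.

Notation Zk k := ('rV[int]_k).

(* F tiles Z^k: there is C ⊆ Z^k such that Z^k is the disjoint union of the
   translates F + c, c ∈ C, i.e. every z lies in F + c for exactly one c ∈ C. *)
Definition tiles (k : nat) (F : {fset Zk k}) : Prop :=
  exists C : Zk k -> Prop,
    forall z : Zk k, exists! c : Zk k, C c /\ (z - c)%R \in F.

Definition diffset (k : nat) (F : {fset Zk k}) : {fset Zk k} :=
  [fset (x - y)%R | x in F, y in F].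

Definition E_free (k : nat) (E : Zk k -> Prop) (A : {fset Zk k}) : bool :=
  `[< forall a b : Zk k, a \in A -> b \in A -> ~ E (a - b)%R >].

Definition phi (k : nat) (E : Zk k -> Prop) (S : {fset Zk k}) : nat :=
  \max_(A <- fpowerset S | E_free E A) #|` A|.

Definition translate (k : nat) (S : {fset Zk k}) (g : Zk k) : {fset Zk k} :=
  [fset (x + g)%R | x in S].

Definition Folner (R : realType) (k : nat) (FN : nat -> {fset Zk k}) : Prop :=
  (forall N, (0 < #|` FN N|)%N) /\
  forall g : Zk k,
    (fun N => ((#|` translate (FN N) g `\` FN N| + #|` FN N `\` translate (FN N) g|)%:R
               / (#|` FN N|)%:R : R)) @ \oo --> (0 : R).

(* The sequence phi_E(F_N)/|F_N| whose limit is Md_{Z^k}(E). *)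
Definition Md_ratio (R : realType) (k : nat) (E : Zk k -> Prop)
  (FN : nat -> {fset Zk k}) (N : nat) : R :=
  (phi E (FN N))%:R / (#|` FN N|)%:R.

(* Main.v *)
Require Import Defs.
From HB Require Import structures.
From mathcomp Require Import all_boot all_order all_algebra.
From mathcomp Require Import finmap.
From mathcomp Require Import all_classical all_reals all_analysis.
Import Order.TTheory GRing.Theory Num.Theory.
Import numFieldNormedType.Exports.
Local Open Scope ring_scope.
Local Open Scope classical_set_scope.
Local Open Scope fset_scope.
From mathcomp Require Import ring lra.
Section Comb.
Variable k : nat.
Implicit Types (S A F : {fset 'rV[int]_k}).

Lemma mem_translate S g z : (z \in translate S g) = (z - g \in S).
Proof.
apply/imfsetP/idP => [[x xS ->]|h]; first by rewrite addrK.
by exists (z - g) => //; rewrite subrK.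
Qed.

Lemma card_sep S (P : pred 'rV[int]_k) :
  #|` [fset x in S | P x]| = (\sum_(x <- S | P x) 1)%N.
Proof. by rewrite card_fset_sum1 -big_fset_condE. Qed.

Lemma card_le1 (B : {fset 'rV[int]_k}) :
  {in B &, forall x y, x = y} -> (#|` B| <= 1)%N.
Proof.
move=> H; have [->|[x xB]] := fset_0Vmem B; first by rewrite cardfs0.
have sub : B `<=` [fset x].
  by apply/fsubsetP => y yB; rewrite inE (H _ _ yB xB).
by have := fsubset_leq_card sub; rewrite cardfs1.
Qed.

Lemma phi_ge (E : 'rV[int]_k -> Prop) S A :
  A `<=` S -> E_free E A -> (#|` A| <= phi E S)%N.
Proof.
move=> AS EA; rewrite /phi.
apply: (@leq_bigmax_seq _ _ (E_free E) (fun B => #|` B|) A) => //.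
by rewrite fpowersetE.
Qed.

Lemma phi_le (E : 'rV[int]_k -> Prop) S m :
  (forall A, A `<=` S -> E_free E A -> (#|` A| <= m)%N) -> (phi E S <= m)%N.
Proof.
move=> H; rewrite /phi; apply/bigmax_leqP_seq => A; rewrite fpowersetE; exact: H.
Qed.

Lemma sum_const_fset (F : {fset 'rV[int]_k}) (c : nat) :
  (\sum_(f <- F) c = #|` F| * c)%N.
Proof.
rewrite card_fset_sum1 big_distrl /=; apply: eq_bigr => i _; by rewrite mul1n.
Qed.

End Comb.
Section Bounds.
Variable k : nat.
Implicit Types (S A F : {fset 'rV[int]_k}).

Lemma card_sepb S (P : pred 'rV[int]_k) :
  #|` [fset x in S | P x]| = (\sum_(x <- S) (P x : nat))%N.
Proof. by rewrite card_sep big_mkcond. Qed.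

Lemma diff_mem F x y : x \in F -> y \in F -> x - y \in diffset F.
Proof. by move=> xF yF; apply/imfset2P; exists x => //; exists y. Qed.

Lemma lower_bound F (C : 'rV[int]_k -> Prop) S :
  (forall z, exists! c, C c /\ z - c \in F) ->
  (#|` S| <= #|` F| * phi (fun x => x \in diffset F `\ (0 : 'rV[int]_k)%R) S
     + \sum_(f <- F) #|` translate S (-f)%R `\` S|)%N.
Proof.
move=> til.
set A := [fset x in S | `[< C x >]].
have AS : A `<=` S by apply/fsubsetP => x; rewrite inE => /andP[].
have Afree : E_free (fun x => x \in diffset F `\ (0 : 'rV[int]_k)%R) A.
  apply/asboolP => a b; rewrite !inE => /andP[aS /asboolP Ca] /andP[bS /asboolP Cb].
  case/andP => ne /imfset2P [x xF [y yF e]].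
  have [c [_ uc]] := til (a + y)%R.
  have ea : c = a by apply: uc; split => //; rewrite addrC addKr.
  have eb : c = b by apply: uc; split => //; rewrite addrAC e subrK.
  by move: ne; rewrite -ea -eb subrr eqxx.
have st1 : (#|` S| <= \sum_(f <- F) \sum_(z <- S) (`[< C (z - f)%R >] : nat))%N.
  rewrite exchange_big /= card_fset_sum1; apply: leq_sum => z _.
  have [c [[Cc zcF] _]] := til z.
  rewrite (bigD1_seq (z - c)%R) //=; last exact: fset_uniq.
  by rewrite subKr asboolT.
apply: (leq_trans st1).
have st2 : forall f, f \in F -> (\sum_(z <- S) (`[< C (z - f)%R >] : nat) <=
    #|` A| + #|` translate S (-f)%R `\` S|)%N.
  move=> f fF; rewrite -card_sepb.
  set B := [fset z in S | `[< C (z - f)%R >]].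
  have -> : #|` B| = #|` [fset (z - f)%R | z in B]|.
    by rewrite [RHS]card_in_imfset //= => x y _ _; apply: addIr.
  apply: leq_trans (leq_card_fsetU _ _).1.
  apply: fsubset_leq_card; apply/fsubsetP => y /imfsetP [z] /=.
  rewrite inE => /andP [zS Cz] ->.
  rewrite !inE mem_translate opprK subrK zS andbT.
  by case: ((z - f)%R \in S) => //=; rewrite Cz.
apply: leq_trans (_ : (\sum_(f <- F) (#|` A| + #|` translate S (-f)%R `\` S|) <= _)%N).
  by rewrite big_seq_cond [X in (_ <= X)%N]big_seq_cond; apply: leq_sum => f /andP[fF _]; exact: st2.
rewrite big_split /= leq_add2r sum_const_fset.
by rewrite leq_mul2l (@phi_ge k _ _ _ AS Afree) orbT.
Qed.
Lemma upper_bound F S : (0 < #|` F|)%N ->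
  (#|` F| * phi (fun x => x \in diffset F `\ (0 : 'rV[int]_k)%R) S
     <= #|` S| + \sum_(f <- F) #|` translate S f `\` S|)%N.
Proof.
move=> F0; rewrite mulnC -leq_divRL //; apply: phi_le => A AS /asboolP Afree.
rewrite leq_divRL // mulnC -sum_const_fset.
apply: leq_trans (_ : (\sum_(f <- F) (\sum_(z <- S) ((z - f)%R \in A : nat)
    + #|` translate S f `\` S|) <= _)%N).
  rewrite big_seq_cond [X in (_ <= X)%N]big_seq_cond; apply: leq_sum => f /andP[fF _].
  rewrite -card_sepb.
  have -> : #|` A| = #|` translate A f|.
    by rewrite [RHS]card_in_imfset //= => x y _ _; apply: addIr.
  apply: leq_trans (leq_card_fsetU _ _).1.
  apply: fsubset_leq_card; apply/fsubsetP => y.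
  rewrite mem_translate => yA.
  have yS : (y - f)%R \in S by apply: (fsubsetP AS).
  rewrite !inE mem_translate yS yA andbT.
  by case: (y \in S).
rewrite big_split /= leq_add2r exchange_big /= card_fset_sum1 leq_sum // => z _.
rewrite -card_sepb; apply: card_le1 => f g; rewrite !inE => /andP[fF fA] /andP[gF gA].
have := Afree _ _ fA gA.
have -> : ((z - f) - (z - g) = g - f)%R by rewrite opprB addrC addrA subrK.
rewrite inE => H; apply/eqP; rewrite eq_sym -subr_eq0; apply/negPn; apply: contra_notN H.
by move=> ne; rewrite in_fset1 ne diff_mem.
Qed.

End Bounds.
Section Ana.
Variable R : realType.
Local Open Scope ring_scope.

Lemma cvg_sum0 (T : Type) (r : seq T) (u : T -> nat -> R) :
  (forall i, u i @ \oo --> (0 : R)) ->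
  (fun N => \sum_(i <- r) u i N) @ \oo --> (0 : R).
Proof.
move=> H; elim: r => [|x r IH].
  under eq_fun do rewrite big_nil; exact: cvg_cst.
under eq_fun do rewrite big_cons.
have := cvgD (H x) IH; rewrite addr0; exact.
Qed.

Lemma real_bounds (a s p U L W : R) : 0 < a -> 0 < s ->
  a * p <= s + U -> s <= a * p + L -> U <= W * s -> L <= W * s ->
  a^-1 - W * a^-1 <= p / s <= a^-1 + W * a^-1.
Proof.
move=> a0 s0 h1 h2 h3 h4.
have as0 : 0 <= a^-1 * s^-1 by rewrite mulr_ge0 // invr_ge0 ltW.
have e1 : p / s = (a * p) * (a^-1 * s^-1) by field; rewrite ?gt_eqF.
apply/andP; split.
  have -> : a^-1 - W * a^-1 = (s - W * s) * (a^-1 * s^-1) by field; rewrite ?gt_eqF.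
  rewrite e1; apply: ler_wpM2r => //.
  apply: le_trans (_ : s - L <= _); first by rewrite lerB.
  by rewrite lerBlDr.
have -> : a^-1 + W * a^-1 = (s + W * s) * (a^-1 * s^-1) by field; rewrite ?gt_eqF.
rewrite e1; apply: ler_wpM2r => //.
by apply: (le_trans h1); rewrite lerD2l.
Qed.

End Ana.
Theorem mainTheorem6 (R : realType) (k : nat) (F : {fset 'rV[int]_k}) :
  tiles F ->
  forall FN : nat -> {fset 'rV[int]_k},
    Folner R FN ->
    Md_ratio R (fun x => x \in diffset F `\ (0 : 'rV[int]_k)%R) FN @ \oo --> ((#|` F|)%:R^-1 : R).
Proof.
move=> [C til] FN [FN0 fol].
have F0 : (0 < #|` F|)%N.
  have [c [[_ cF] _]] := til 0%R.
  by rewrite cardfs_gt0; apply/fset0Pn; exists (0 - c)%R.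
set e := fun g N => ((#|` translate (FN N) g `\` FN N| + #|` FN N `\` translate (FN N) g|)%:R
               / (#|` FN N|)%:R : R).
set W := fun N => \sum_(f <- F) (e f N + e (- f)%R N)%R.
have hW : W @ \oo --> (0 : R).
  apply: (@cvg_sum0 R _ F (fun f N => (e f N + e (- f)%R N)%R)) => f.
  rewrite -[0 : R]addr0; exact: cvgD (fol f) (fol (- f)%R).
have e0 : forall g N, (0 : R) <= e g N by move=> g N; rewrite /e divr_ge0.
have ed : forall g N, ((#|` translate (FN N) g `\` FN N|)%:R <= e g N * (#|` FN N|)%:R :> R)%R.
  move=> g N; rewrite /e divfK ?pnatr_eq0 -?lt0n ?FN0 //.
  by rewrite ler_nat leq_addr.
have a0 : (0 : R) < (#|` F|)%:R by rewrite ltr0n.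
apply: (squeeze_cvgr (f := fun N => ((#|` F|)%:R^-1 - W N * (#|` F|)%:R^-1)%R)
   (h := fun N => ((#|` F|)%:R^-1 + W N * (#|` F|)%:R^-1)%R)).
- near=> N; rewrite /Md_ratio.
  apply: (@real_bounds R _ _ _
    ( ((\sum_(f <- F) #|` translate (FN N) f `\` FN N|)%N)%:R)
    (((\sum_(f <- F) #|` translate (FN N) (- f)%R `\` FN N|)%N)%:R) (W N)) => //.
  + by rewrite ltr0n.
  + rewrite -natrM -natrD ler_nat; exact: upper_bound.
  + rewrite -natrM -natrD ler_nat; exact: (@lower_bound k F C (FN N) til).
  + rewrite natr_sum /W mulr_suml; apply: ler_sum => f _.
    apply: (le_trans (ed f N)); apply: ler_wpM2r => //; rewrite lerDl //.
  + rewrite natr_sum /W mulr_suml; apply: ler_sum => f _.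
    apply: (le_trans (ed (- f)%R N)); apply: ler_wpM2r => //; rewrite lerDr //.
- have := cvgB (@cvg_cst _ ((#|` F|)%:R^-1 : R) _ _ _) (cvgMr_tmp (b := (#|` F|)%:R^-1 : R) hW).
  rewrite mul0r subr0; apply; typeclasses eauto.
- have := cvgD (@cvg_cst _ ((#|` F|)%:R^-1 : R) _ _ _) (cvgMr_tmp (b := (#|` F|)%:R^-1 : R) hW).
  rewrite mul0r addr0; apply; typeclasses eauto.
Unshelve. all: by end_near.
Qed.
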